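(* Let $\mathsf{S}$ be a random sprinkle in $d$-dimensional Minkowski spacetime, i.e. the set of points of a Poisson point process with intensity $\rho\cdot\nu$ ($\rho>0$ constant, $\nu$ Lebesgue volume measure), with the causal order restricted from Minkowski spacetime. Then, with probability $1$, $\mathsf{S}$ contains no pair of distinct singleton-symmetric elements.
   Context: Minkowski spacetime $\mathbb{M}^d$ is $\mathbb{R}^{1,d-1}$ with metric $\mathrm{diag}(1,-1,\dots,-1)$, partially ordered by $x\le y$ iff $y-x$ is zero or a future-directed causal vector. In a poset $P$, $b$ covers $a$ if $a<b$ and no $c$ satisfies $a<c<b$; $L^-(a)$ is the set of elements covered by $a$ and $L^+(a)$ the set of elements covering $a$. Two elements $a,b\in P$ are singleton-symmetric if $L^-(a)=L^-(b)$ and $L^+(a)=L^+(b)$. *)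

(* Defs.v *)
From HB Require Import structures.
From mathcomp Require Import all_boot all_order all_algebra.
From mathcomp Require Import all_classical all_reals all_analysis.
From mathcomp Require Import finmap.
Set Implicit Arguments. Unset Strict Implicit. Unset Printing Implicit Defensive.
Import Order.TTheory GRing.Theory Num.Theory.
Local Open Scope classical_set_scope.
Local Open Scope ring_scope.

Section Minkowski.
Variables (R : realType) (d : nat).

(* Points of d-dimensional Minkowski spacetime R^{1,d-1}: d-tuples of reals,
   coordinate 0 is time, coordinates 1..d-1 are space.  The measurable
   structure on d.-tuple R is the library's product (Borel) sigma-algebra. *)
Definition time (x : d.-tuple R) : R := nth 0 x 0.
Definition space_sq (x : d.-tuple R) : R := \sum_(1 <= i < d) (nth 0 x i) ^+ 2.
Definition diffv (y x : d.-tuple R) : d.-tuple R :=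
  [tuple tnth y i - tnth x i | i < d].

Definition future_causal (v : d.-tuple R) : Prop :=
  0 < time v /\ space_sq v <= time v ^+ 2.

Definition causal_le (x y : d.-tuple R) : Prop :=
  x = y \/ future_causal (diffv y x).
Definition causal_lt (x y : d.-tuple R) : Prop := causal_le x y /\ x <> y.

Definition covers (S : set (d.-tuple R)) (a b : d.-tuple R) : Prop :=
  S a /\ S b /\ causal_lt a b /\ ~ (exists c, S c /\ causal_lt a c /\ causal_lt c b).

Definition Lminus (S : set (d.-tuple R)) (a : d.-tuple R) : set (d.-tuple R) :=
  [set c | covers S c a].
Definition Lplus (S : set (d.-tuple R)) (a : d.-tuple R) : set (d.-tuple R) :=
  [set c | covers S a c].

Definition singleton_symmetric (S : set (d.-tuple R)) (a b : d.-tuple R) : Prop :=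
  Lminus S a = Lminus S b /\ Lplus S a = Lplus S b.

Definition box (a b : d.-tuple R) : set (d.-tuple R) :=
  [set x | forall i : 'I_d, tnth a i <= tnth x i < tnth b i].

(* nu is Lebesgue volume measure on R^d: it gives every box its volume
   (this characterizes Lebesgue measure on the Borel sets uniquely). *)
Definition is_lebesgue_volume (nu : {measure set (d.-tuple R) -> \bar R}) : Prop :=
  forall a b : d.-tuple R, (forall i : 'I_d, tnth a i <= tnth b i) ->
    nu (box a b) = (\prod_(i < d) (tnth b i - tnth a i))%:E.

Definition bounded_measurable (B : set (d.-tuple R)) : Prop :=
  measurable B /\ exists a b, B `<=` box a b.

(* Poisson probability mass function with mean r >= 0 (mean 0 gives Dirac at 0) *)
Definition poisson_mass (r : R) (k : nat) : R := r ^+ k / (factorial k)%:R * expR (- r).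

Definition count_in (X : set (d.-tuple R)) (B : set (d.-tuple R)) : nat :=
  #|` fset_set (X `&` B)|%fset.

Definition poisson_point_process (dT : measure_display) (T : measurableType dT)
    (P : probability T R) (nu : {measure set (d.-tuple R) -> \bar R}) (rho : R)
    (S : T -> set (d.-tuple R)) : Prop :=
  [/\ (forall B w, bounded_measurable B -> finite_set (S w `&` B)),
      (forall B k, bounded_measurable B ->
         measurable [set w | count_in (S w) B = k]),
      (forall B k, bounded_measurable B ->
         P [set w | count_in (S w) B = k] = (poisson_mass (rho * fine (nu B)) k)%:E) &
      (forall (m : nat) (B : 'I_m -> set (d.-tuple R)) (k : 'I_m -> nat),
         (forall i, bounded_measurable (B i)) ->
         (forall i j, i != j -> B i `&` B j = set0) ->
         P (\bigcap_(i in [set: 'I_m]) [set w | count_in (S w) (B i) = k i]) =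
         (\prod_(i < m) P [set w | count_in (S w) (B i) = k i])%E)].

End Minkowski.

(* Main.v *)
Require Import Defs.
From HB Require Import structures.
From mathcomp Require Import all_boot all_order all_algebra.
From mathcomp Require Import all_classical all_reals all_analysis finmap.
From mathcomp Require Import ring lra.
Import Order.TTheory GRing.Theory Num.Theory.
Local Open Scope classical_set_scope.
Local Open Scope ring_scope.
Set Implicit Arguments. Unset Strict Implicit. Unset Printing Implicit Defensive.



Section Helpers.
Variables (R : realType) (d : nat).
Local Notation tup := (d.-tuple R).

Definition fcf (f : nat -> R) : Prop :=
  0 < f 0%N /\ \sum_(1 <= i < d) f i ^+ 2 <= f 0%N ^+ 2.

Lemma term_le_sum (F : nat -> R) i : (1 <= i < d)%N -> (forall j, 0 <= F j) ->
  F i <= \sum_(1 <= j < d) F j.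
Proof.
move=> /andP[i1 id] F0.
rewrite (big_cat_nat _ (n:=i)) //=; last exact: ltnW.
rewrite [X in _ + X](big_ltn id)/=.
have h1 : 0 <= \sum_(1 <= j < i) F j by apply: sumr_ge0 => *; exact: F0.
have h2 : 0 <= \sum_(i.+1 <= j < d) F j by apply: sumr_ge0 => *; exact: F0.
lra.
Qed.

Lemma amgm_sum (x y : nat -> R) (A B : R) : 0 < A -> 0 < B ->
  \sum_(1 <= i < d) x i ^+ 2 <= A ^+ 2 -> \sum_(1 <= i < d) y i ^+ 2 <= B ^+ 2 ->
  \sum_(1 <= i < d) x i * y i <= A * B.
Proof.
move=> A0 B0 hx hy.
have H : \sum_(1 <= i < d) (2 * A * B) * (x i * y i) <=
         \sum_(1 <= i < d) (B ^+ 2 * x i ^+ 2 + A ^+ 2 * y i ^+ 2).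
  apply: ler_sum => i _.
  have := sqr_ge0 (B * x i - A * y i); nra.
move: H; rewrite -mulr_sumr big_split /= -!mulr_sumr => H.
have : 2 * A * B * \sum_(1 <= i < d) x i * y i <= 2 * A * B * (A * B).
  apply: (le_trans H).
  have h1 : B ^+ 2 * \sum_(1 <= i < d) x i ^+ 2 <= B ^+ 2 * A ^+ 2.
    by rewrite ler_wpM2l // sqr_ge0.
  have h2 : A ^+ 2 * \sum_(1 <= i < d) y i ^+ 2 <= A ^+ 2 * B ^+ 2.
    by rewrite ler_wpM2l // sqr_ge0.
  nra.
rewrite ler_pM2l //; nra.
Qed.

Lemma fcf_add f g : fcf f -> fcf g -> fcf (fun i => f i + g i).
Proof.
move=> [f0 hf] [g0 hg]; split; first by rewrite addr_gt0.
have := amgm_sum f0 g0 hf hg => hfg.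
have -> : \sum_(1 <= i < d) (f i + g i) ^+ 2 =
  \sum_(1 <= i < d) f i ^+ 2 + \sum_(1 <= i < d) g i ^+ 2 +
  2 * \sum_(1 <= i < d) f i * g i.
  rewrite mulr_sumr -!big_split /=; apply: eq_bigr => i _; ring.
nra.
Qed.

Lemma fcf_ext f g : (forall i, f i = g i) -> fcf f -> fcf g.
Proof. by move=> e; have -> : f = g by apply: funext. Qed.

Lemma nth_diffv (y x : tup) i : nth 0 (Defs.diffv y x) i = nth 0 y i - nth 0 x i.
Proof.
case: (ltnP i d) => hi.
  by rewrite /Defs.diffv (nth_mktuple _ _ (Ordinal hi)) !(tnth_nth 0).
by rewrite !nth_default ?size_tuple // subr0.
Qed.

Lemma causal_ltP (x y : tup) :
  causal_lt x y <-> fcf (fun i => nth 0 y i - nth 0 x i).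
Proof.
split.
  move=> [[->|H] ne] //; apply: fcf_ext H => i; exact: nth_diffv.
move=> H; split.
  right; apply: fcf_ext H => i; by rewrite nth_diffv.
move=> e; move: H; rewrite e => -[]; by rewrite subrr ltxx.
Qed.

Lemma lt_trans' (x y z : tup) : causal_lt x y -> causal_lt y z -> causal_lt x z.
Proof.
move=> /causal_ltP h1 /causal_ltP h2; apply/causal_ltP.
apply: fcf_ext (fcf_add h2 h1) => i /=; ring.
Qed.

Lemma lt_irr (x : tup) : ~ causal_lt x x.
Proof. by move=> [_ ]. Qed.

Lemma seq_max (T : eqType) (f : T -> R) (s : seq T) x0 : x0 \in s ->
  exists2 m, m \in s & forall e, e \in s -> f e <= f m.
Proof.
elim: s x0 => // y s IH x0 _.
case: s IH => [|z s] IH.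
  by exists y => [|e]; rewrite ?mem_seq1 // => /eqP ->.
have [m ms mmax] := IH z (mem_head _ _).
case: (leP (f y) (f m)) => hym.
  exists m; first by rewrite in_cons ms orbT.
  by move=> e; rewrite in_cons => /orP[/eqP ->|/mmax].
exists y; first exact: mem_head.
move=> e; rewrite in_cons => /orP[/eqP ->//|/mmax h]; exact: (le_trans h (ltW hym)).
Qed.

Lemma finite_max (F : set tup) (f : tup -> R) x0 : finite_set F -> F x0 ->
  exists2 m, F m & forall e, F e -> f e <= f m.
Proof.
move=> fF Fx0.
have : x0 \in fset_set F by rewrite in_fset_set //; apply/mem_set.
move=> /(seq_max f) [m ms mmax].
exists m; first by move: ms; rewrite in_fset_set // => /set_mem.
move=> e Fe; apply: mmax; by rewrite in_fset_set //; apply/mem_set.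
Qed.

Lemma noSS (X : set tup) (Hfin : forall lo hi, finite_set (X `&` box lo hi))
  a b c : X a -> X c -> causal_lt c a -> ~ causal_lt c b ->
  Lminus X a <> Lminus X b.
Proof.
move=> Xa Xc ca ncb E.
pose F := [set e | X e /\ (c = e \/ causal_lt c e) /\ causal_lt e a /\ ~ causal_lt e b].
pose D := nth 0 a 0 - nth 0 c 0.
pose lo : tup := [tuple nth 0 c i - D - 1 | i < d].
pose hi : tup := [tuple nth 0 c i + D + 1 | i < d].
have FB : F `<=` X `&` box lo hi.
  move=> e [Xe [ce [ea _]]]; split => // i.
  rewrite /lo /hi !tnth_mktuple (tnth_nth 0).
  have /causal_ltP [D0 _] := ca; rewrite -/D in D0.
  case: ce => [<-|/causal_ltP [ce0 ces]]; first by apply/andP; split; lra.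
  have /causal_ltP [ea0 eas] := ea.
  have [->|i0] := eqVneq (val i) 0%N.
    rewrite /D in D0 *; apply/andP; split; lra.
  have hi1 : (1 <= i < d)%N by rewrite lt0n i0 ltn_ord.
  have := term_le_sum (F:=fun j => (nth 0 e j - nth 0 c j) ^+ 2) hi1 (fun j => sqr_ge0 _).
  move=> /(le_trans)/(_ ces) => h.
  rewrite /D; apply/andP; split; nra.
have fF : finite_set F := sub_finite_set FB (Hfin lo hi).
have Fc : F c by split => //; split; [left|split].
have [m [Xm [cm [ma mb]]] mmax] := finite_max (fun x => nth 0 x 0) fF Fc.
have cov : covers X m a.
  split => //; split => //; split => //.
  move=> [e [Xe [me ea]]].
  have Fe : F e.
    split => //; split; first by right; case: cm => [->//|h]; exact: lt_trans' h me.
    split => // eb; apply: mb; exact: lt_trans' me eb.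
  have := mmax e Fe; have /causal_ltP [h _] := me; lra.
have : Lminus X b m by rewrite -E.
by move=> [_ [_ [h _]]].
Qed.

End Helpers.


Section Geo.
Variables (R : realType) (d : nat).
Local Notation tup := (d.-tuple R).

Definition rr (k : nat) : R := (k.+2%:R)^-1.
Definition Qn (q : d.-tuple int) : R :=
  Num.sqrt (\sum_(1 <= j < d) ((nth 0 q j)%:~R : R) ^+ 2).
Definition uu (q : d.-tuple int) j : R := if j == 0%N then Qn q else (nth 0 q j)%:~R.
Definition pp (P : d.-tuple int) k j : R := (nth 0 P j)%:~R * rr k.
Definition cen P q k (n : nat) j := pp P k j - n.+1%:R * uu q j.
Definition lo P q k n : tup := [tuple cen P q k n i - rr k | i < d].
Definition hi P q k n : tup := [tuple cen P q k n i + rr k | i < d].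
Definition Wset P q k : set tup := \bigcup_n box (lo P q k n) (hi P q k n).

Lemma Qn_sq (q : d.-tuple int) : \sum_(1 <= j < d) ((nth 0 q j)%:~R : R) ^+ 2 = Qn q ^+ 2.
Proof. by rewrite sqr_sqrtr // sumr_ge0 // => *; rewrite sqr_ge0. Qed.

Lemma W_sub P q k (a b : tup) : 1 <= Qn q ->
  (forall y : nat -> R, (forall j, (j < d)%N -> pp P k j - rr k <= y j <= pp P k j + rr k) ->
     fcf d (fun j => nth 0 a j - y j)) ->
  (forall y : nat -> R, (forall j, (j < d)%N -> pp P k j - rr k <= y j <= pp P k j + rr k) ->
     (nth 0 b 0 - y 0%N) * Qn q < \sum_(1 <= j < d) (nth 0 b j - y j) * (nth 0 q j)%:~R) ->
  forall x, Wset P q k x -> causal_lt x a /\ ~ causal_lt x b.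
Proof.
move=> Q1 HA HB x [n _ xb].
pose y := fun j => nth 0 x j + n.+1%:R * uu q j.
have hy : forall j, (j < d)%N -> pp P k j - rr k <= y j <= pp P k j + rr k.
  move=> j hj; have := xb (Ordinal hj).
  rewrite /lo /hi !tnth_mktuple (tnth_nth 0) /= /cen /y => /andP[h1 h2].
  apply/andP; split; lra.
have Q0 : 0 < Qn q by apply: lt_le_trans Q1.
have fu : fcf d (fun j => n.+1%:R * uu q j).
  split; first by rewrite /uu /= mulr_gt0.
  rewrite (eq_big_nat _ _ (F2 := fun j => n.+1%:R^+2 * ((nth 0 q j)%:~R : R)^+2)); last first.
    by move=> j /andP[j1 _]; rewrite /uu; case: eqP j1 => [->//|_ _]; rewrite exprMn.
  by rewrite -mulr_sumr Qn_sq /uu /= exprMn.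
split.
  apply/causal_ltP; apply: fcf_ext (fcf_add (HA y hy) fu) => j /=; rewrite /y; ring.
move/causal_ltP => hb.
have [T0 Ts] : fcf d (fun j => (nth 0 b j - y j) + n.+1%:R * uu q j).
  by apply: fcf_ext hb => j; rewrite /y; ring.
have Hq : \sum_(1 <= j < d) ((nth 0 q j)%:~R : R) ^+ 2 <= Qn q ^+ 2 by rewrite Qn_sq.
have := amgm_sum T0 Q0 Ts Hq.
rewrite (eq_big_nat _ _ (F2 := fun j => (nth 0 b j - y j) * (nth 0 q j)%:~R +
     n.+1%:R * ((nth 0 q j)%:~R : R)^+2)); last first.
  by move=> j /andP[j1 _]; rewrite /uu; case: eqP j1 => [->//|_ _]; ring.
rewrite big_split /= -mulr_sumr Qn_sq.
have := HB y hy; rewrite /uu /=.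
nra.
Qed.

End Geo.
Arguments rr {R} k.
Arguments Qn {R d} q.
Arguments uu {R d} q j.
Arguments pp {R d} P k j.
Arguments cen {R d} P q k n j.
Arguments lo {R d} P q k n.
Arguments hi {R d} P q k n.
Arguments Wset {R d} P q k.


Section Geo2.
Variables (R : realType) (d : nat).
Local Notation tup := (d.-tuple R).

Lemma nth_mk (X : Type) (x0 : X) (f : nat -> X) j : (j < d)%N ->
  nth x0 [tuple f i | i < d] j = f j.
Proof. by move=> hj; rewrite (nth_mktuple _ _ (Ordinal hj)). Qed.

Lemma G0 (a b : tup) : a <> b -> ~ causal_lt a b -> ~ causal_lt b a ->
  (nth 0 b 0 - nth 0 a 0) ^+ 2 < \sum_(1 <= j < d) (nth 0 b j - nth 0 a j) ^+ 2.
Proof.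
move=> ab nab nba; rewrite ltNge; apply/negP => H.
have Ss0 : 0 <= \sum_(1 <= j < d) (nth 0 b j - nth 0 a j) ^+ 2.
  by apply: sumr_ge0 => *; apply: sqr_ge0.
have t1 : nth 0 b 0 - nth 0 a 0 <= 0.
  rewrite leNgt; apply/negP => h; apply: nab; apply/causal_ltP; split => //.
have t2 : 0 <= nth 0 b 0 - nth 0 a 0.
  rewrite leNgt; apply/negP => h; apply: nba; apply/causal_ltP; split.
    lra.
  rewrite (eq_big_nat _ _ (F2 := fun j => (nth 0 b j - nth 0 a j) ^+ 2)); last first.
    by move=> j _; rewrite -sqrrN opprB.
  by rewrite -sqrrN opprB.
apply: ab; apply: val_inj; apply: (@eq_from_nth _ 0); first by rewrite !size_tuple.
rewrite size_tuple => j hj.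
have [->|j0] := eqVneq j 0%N; first lra.
have hj1 : (1 <= j < d)%N by rewrite lt0n j0 hj.
have := term_le_sum (F := fun j => (nth 0 b j - nth 0 a j) ^+ 2) hj1 (fun _ => sqr_ge0 _).
move=> h; have : (nth 0 b j - nth 0 a j) ^+ 2 <= 0 by nra.
rewrite le_eqVlt ltNge sqr_ge0 orbF sqrf_eq0 subr_eq0 => /eqP ->//.
Qed.

Lemma Kfacts (s : nat -> R) (tau : R) :
  tau ^+ 2 < \sum_(1 <= j < d) s j ^+ 2 ->
  exists (q : d.-tuple int) (m : R), [/\ 0 < m, 1 <= (Qn q : R) &
    (tau + m) * (Qn q : R) <= \sum_(1 <= j < d) s j * (nth 0 q j)%:~R].
Proof.
set Ss := \sum_(1 <= j < d) s j ^+ 2 => hS.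
have Ss0 : 0 <= Ss by apply: sumr_ge0 => *; apply: sqr_ge0.
pose N := Num.sqrt Ss.
have N2 : N ^+ 2 = Ss by rewrite sqr_sqrtr.
have N0 : 0 < N by rewrite sqrtr_gt0; have := sqr_ge0 tau; lra.
have gN : tau < N by nra.
pose m := (N - tau) / 2.
have m0 : 0 < m by rewrite /m; lra.
pose L := \sum_(1 <= j < d) `|s j|.
have L0 : 0 <= L by apply: sumr_ge0 => *.
pose c := L / N + d%:R.
have c0 : 0 <= c by rewrite /c addr_ge0 // divr_ge0 // ltW.
have Nc : N * c = L + N * d%:R by rewrite /c mulrDr mulrCA divff ?mulr1 // gt_eqF.
pose K := 2 * (L + N * c) / (N * (N - tau)) + (N + L) / N ^+ 2.
have K1 : 0 <= 2 * (L + N * c) / (N * (N - tau)).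
  apply: divr_ge0.
    by rewrite mulr_ge0 // addr_ge0 // mulr_ge0 // ltW.
  by rewrite mulr_ge0 // ?subr_ge0 ltW.
have K2 : 0 <= (N + L) / N ^+ 2 by apply: divr_ge0; nra.
have K0 : 0 <= K by rewrite /K addr_ge0.
have KA : L + N * c <= K * N * m.
  have -> : K * N * m = 2 * (L + N * c) / (N * (N - tau)) * N * m + (N + L) / N ^+ 2 * N * m
    by rewrite /K; ring.
  have -> : 2 * (L + N * c) / (N * (N - tau)) * N * m = L + N * c.
    rewrite /m; field; rewrite (gt_eqF N0) andbT subr_eq0 gt_eqF //.
  have : 0 <= (N + L) / N ^+ 2 * N * m by apply: mulr_ge0; [apply: mulr_ge0 => //; exact: ltW | exact: ltW].
  lra.
have KB : N + L <= K * N ^+ 2.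
  have -> : K * N ^+ 2 = 2 * (L + N * c) / (N * (N - tau)) * N ^+ 2 + (N + L) / N ^+ 2 * N ^+ 2
    by rewrite /K; ring.
  rewrite divfK ?gt_eqF ?exprn_gt0 //.
  have : 0 <= 2 * (L + N * c) / (N * (N - tau)) * N ^+ 2 by rewrite mulr_ge0 // sqr_ge0.
  lra.
pose q : d.-tuple int := [tuple Num.floor (K * s i) | i < d].
have qE : forall j, (j < d)%N -> ((nth 0 q j)%:~R : R) = (Num.floor (K * s j))%:~R.
  by move=> j hj; rewrite /q (nth_mk _ (fun i => Num.floor (K * s i))).
have qb : forall j, K * s j - 1 < (Num.floor (K * s j))%:~R <= K * s j.
  move=> j; have /andP[h1 h2] := floor_itv (K * s j).
  by rewrite h1 andbT; move: h2; rewrite intrD; lra.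
set Sq := \sum_(1 <= j < d) s j * (nth 0 q j)%:~R.
have Sqa : K * Ss - L <= Sq.
  have -> : K * Ss - L = \sum_(1 <= j < d) (K * s j ^+ 2 - `|s j|).
    by rewrite sumrB mulr_sumr.
  apply: ler_sum_nat => j /andP[_ hj]; rewrite qE //.
  have /andP[h1 h2] := qb j.
  case: (lerP 0 (s j)) => hs.
    rewrite ger0_norm //; nra.
  rewrite ltr0_norm //; nra.
have Qb : (Qn q : R) ^+ 2 <= K ^+ 2 * Ss + 2 * K * L + d%:R.
  rewrite -Qn_sq.
  have : \sum_(1 <= j < d) ((nth 0 q j)%:~R : R) ^+ 2 <=
         \sum_(1 <= j < d) (K ^+ 2 * s j ^+ 2 + 2 * K * `|s j| + 1).
    apply: ler_sum_nat => j /andP[_ hj]; rewrite qE //.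
    have /andP[h1 h2] := qb j.
    case: (lerP 0 (s j)) => hs.
      have Ks : 0 <= K * s j by rewrite mulr_ge0.
      rewrite ger0_norm //; nra.
    have Ks : K * s j <= 0 by rewrite mulr_ge0_le0 // ltW.
    rewrite ltr0_norm //; nra.
  rewrite !big_split /= -!mulr_sumr sumr_const_nat.
  have : ((d - 1)%N%:R : R) <= d%:R by rewrite ler_nat leq_subr.
  rewrite -/Ss -/L; lra.
have hdd : (d%:R : R) <= d%:R ^+ 2.
  by rewrite -natrX ler_nat; case: (d) => // n; rewrite expnS leq_pmulr // expn_gt0.
have Q0' : 0 <= (Qn q : R) by rewrite /Qn sqrtr_ge0.
have QKN : (Qn q : R) <= K * N + c.
  have hc : (d%:R : R) <= c ^+ 2.
    have : (d%:R : R) <= c by rewrite /c lerDr divr_ge0 // ltW.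
    nra.
  have : (Qn q : R) ^+ 2 <= (K * N + c) ^+ 2.
    apply: (le_trans Qb).
    have -> : (K * N + c) ^+ 2 = K ^+ 2 * Ss + 2 * K * (N * c) + c ^+ 2 by rewrite -N2; ring.
    rewrite Nc.
    have : 0 <= 2 * K * (N * d%:R) by rewrite !mulr_ge0 // ltW.
    nra.
  have : 0 <= K * N + c by rewrite addr_ge0 // mulr_ge0 // ltW.
  nra.
have SqN : N <= Sq by nra.
have Qpos : 0 < (Qn q : R).
  rewrite lt_def Q0' andbT; apply/eqP => Q0.
  have : Sq = 0.
    rewrite /Sq big1_seq // => j; rewrite mem_index_iota => hj.
    have := term_le_sum (F := fun j => ((nth 0 q j)%:~R : R) ^+ 2) hj (fun _ => sqr_ge0 _).
    rewrite Qn_sq Q0 expr0n /= => h.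
    have : ((nth 0 q j)%:~R : R) ^+ 2 == 0 by rewrite eq_le h sqr_ge0.
    by rewrite sqrf_eq0 => /eqP ->; rewrite mulr0.
  lra.
have SqQ : Sq <= N * (Qn q : R).
  apply: amgm_sum => //; first by rewrite N2.
  by rewrite Qn_sq.
have Q1 : 1 <= (Qn q : R) by nra.
exists q, m; split => //; rewrite -/Sq.
case: (lerP (tau + m) 0) => htm.
  have : (tau + m) * (Qn q : R) <= 0 by nra.
  lra.
have e1 : tau + m = N - m by rewrite /m; field.
rewrite e1.
have : (N - m) * (Qn q : R) <= (N - m) * (K * N + c) by rewrite ler_wpM2l //; lra.
nra.
Qed.

End Geo2.


Section Geo3.
Variables (R : realType) (d : nat).
Local Notation tup := (d.-tuple R).

Lemma geo (a b : tup) : a <> b -> ~ causal_lt a b -> ~ causal_lt b a ->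
  exists P q k, 1 <= (Qn q : R) /\
    forall x, Wset P q k x -> causal_lt x a /\ ~ causal_lt x b.
Proof.
move=> ab nab nba.
pose s := fun j => nth 0 b j - nth 0 a j.
have hG := G0 ab nab nba.
have := hG => /(@Kfacts R d s (s 0%N)) [q [m [m0 Q1 Hq]]].
pose Q := (Qn q : R).
have Q0 : 0 < Q by apply: lt_le_trans Q1.
pose D := (d%:R : R).
have D0 : 0 <= D by [].
pose k := Num.truncn (8 * (D + 1) / m).
pose r := rr (R:=R) k.
have k2 : 8 * (D + 1) / m < k.+2%:R.
  apply: (lt_trans (truncnS_gt _)); by rewrite ltr_nat.
have r0 : 0 < r by rewrite /r /rr invr_gt0 ltr0n.
have rk : r * k.+2%:R = 1 by rewrite /r /rr mulVf // pnatr_eq0.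
have hr : 8 * (D + 1) * r < m.
  move: k2; rewrite ltr_pdivrMr // => h; nra.
pose delta := m / 2.
pose ps := fun j : nat => nth 0 a j - (if j == 0%N then delta else 0).
pose P : d.-tuple int := [tuple Num.floor (ps i * k.+2%:R) | i < d].
have ppb : forall j, (j < d)%N -> ps j - r < pp P k j <= ps j.
  move=> j hj; rewrite /pp (nth_mk _ (fun i => Num.floor (ps i * k.+2%:R))) //.
  have /andP[h1 h2] := floor_itv (ps j * k.+2%:R).
  move: h2; rewrite intrD => h2.
  have e : ps j * k.+2%:R * r = ps j by rewrite -mulrA [_ * r]mulrC rk mulr1.
  rewrite -/r; apply/andP; split; nra.
have HA : forall y : nat -> R, (forall j, (j < d)%N -> pp P k j - rr k <= y j <= pp P k j + rr k) ->
    forall j, (j < d)%N -> - r <= nth 0 a j - y j - (if j == 0%N then delta else 0) <= 2 * r.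
  move=> y hy j hj; have /andP[h1 h2] := hy j hj; have /andP[h3 h4] := ppb j hj.
  move: h1 h2 h3 h4; rewrite -/r /ps => h1 h2 h3 h4; apply/andP; split; lra.
exists P, q, k; split => //.
have hd : (0 < d)%N.
  case: (posnP d) => // d0; move: hG; rewrite big_geq ?d0 //.
  by rewrite ltNge sqr_ge0.
apply: W_sub => // y hy.
  have h0 := HA y hy 0%N hd; rewrite eqxx in h0.
  have a0 : 0 < nth 0 a 0 - y 0%N by rewrite /delta in h0; move: h0 => /andP[h0 _]; nra.
  split => //.
  have : \sum_(1 <= j < d) (nth 0 a j - y j) ^+ 2 <= \sum_(1 <= j < d) (4 * r ^+ 2).
    apply: ler_sum_nat => j /andP[j1 jd]; have := HA y hy j jd.
    case: eqP (j1) => [->//|_ _]; rewrite subr0 => /andP[h1 h2]; nra.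
  rewrite sumr_const_nat.
  have : ((d - 1)%N%:R : R) <= D by rewrite ler_nat leq_subr.
  move: h0 => /andP[h01 h02].
  rewrite /delta in h01 h02 *.
  have : 4 * D * r ^+ 2 * 16 <= m ^+ 2.
    have X0 : 0 < 8 * (D + 1) * r by apply: mulr_gt0 => //; lra.
    have : (8 * (D + 1) * r) ^+ 2 < m ^+ 2 by nra.
    have -> : (8 * (D + 1) * r) ^+ 2 = 64 * (D + 1) ^+ 2 * r ^+ 2 by ring.
    move=> H64.
    nra.
  move=> h1 h2; rewrite -mulr_natr => h3.
  have : 4 * r ^+ 2 * (d - 1)%N%:R <= 4 * r ^+ 2 * D by rewrite ler_wpM2l // mulr_ge0 // sqr_ge0.
  have Dr : 0 <= D * r by rewrite mulr_ge0 // ltW.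
  have z : m / 4 <= nth 0 a 0 - y 0%N by lra.
  have z2 : (m / 4) ^+ 2 <= (nth 0 a 0 - y 0%N) ^+ 2.
    by rewrite ler_sqr // ?nnegrE; lra.
  have e16 : (m / 4) ^+ 2 = m ^+ 2 / 16 by field.
  rewrite e16 in z2; lra.
have h0 := HA y hy 0%N hd; rewrite eqxx in h0.
have Hs : \sum_(1 <= j < d) (nth 0 b j - y j) * (nth 0 q j)%:~R =
  \sum_(1 <= j < d) s j * (nth 0 q j)%:~R + \sum_(1 <= j < d) (nth 0 a j - y j) * (nth 0 q j)%:~R.
  by rewrite -big_split /=; apply: eq_bigr => j _; rewrite /s; ring.
have Ha : - (2 * r * Q) *+ (d - 1) <= \sum_(1 <= j < d) (nth 0 a j - y j) * (nth 0 q j)%:~R.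
  rewrite -sumr_const_nat; apply: ler_sum_nat => j /andP[j1 jd].
  have := HA y hy j jd; case: eqP (j1) => [->//|_ _]; rewrite subr0 => /andP[h1 h2].
  have hq : ((nth 0 q j)%:~R : R) ^+ 2 <= Q ^+ 2.
    rewrite /Q -Qn_sq.
    apply: (term_le_sum (F := fun j => ((nth 0 q j)%:~R : R) ^+ 2)) => [|i]; last exact: sqr_ge0.
    by rewrite j1 jd.
  have hq1 : - Q <= (nth 0 q j)%:~R <= Q by apply/andP; split; nra.
  move: hq1 => /andP[hq1 hq2]; nra.
rewrite Hs.
move: Ha; rewrite -[_ *+ (d - 1)]mulr_natr => Ha.
have : ((d - 1)%N%:R : R) <= D by rewrite ler_nat leq_subr.
move: h0 => /andP[h01 h02]; rewrite /delta in h01 h02.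
have : (nth 0 b 0 - y 0%N) = s 0%N + (nth 0 a 0 - y 0%N) by rewrite /s; ring.
move=> -> hD.
have : 2 * r * Q * (d - 1)%N%:R <= 2 * r * Q * D by rewrite ler_wpM2l // !mulr_ge0 // ltW.
rewrite -/Q in Hq.
have Dr : 0 <= D * r by rewrite mulr_ge0 // ltW.
have pos : 0 < m - (nth 0 a 0 - y 0%N) - 2 * r * D by lra.
have := mulr_gt0 Q0 pos.
rewrite -/Q; lra.
Qed.

End Geo3.


Section Prob.
Variables (R : realType) (d : nat).
Local Notation tup := (d.-tuple R).

Lemma box_meas (lo hi : tup) : measurable (box lo hi).
Proof.
have -> : box lo hi = \bigcap_(i in [set: 'I_d])
    ((fun x : tup => tnth x i) @^-1` `[tnth lo i, tnth hi i[).
  apply/seteqP; split => x /=.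
    by move=> H i _; rewrite /= in_itv /=; exact: H i.
  by move=> H i; have := H i I; rewrite /= in_itv.
apply: fin_bigcap_measurable; first exact: finite_finset.
move=> i _; have := measurable_tnth i measurableT (measurable_itv `[tnth lo i, tnth hi i[).
by rewrite setTI.
Qed.

Lemma count0 (X B : set tup) : X `&` B = set0 -> count_in X B = 0%N.
Proof. by rewrite /count_in => ->; rewrite fset_set0 cardfs0. Qed.

Lemma negl_W (dT : measure_display) (T : measurableType dT) (P : probability T R)
  (nu : {measure set tup -> \bar R}) (Hnu : is_lebesgue_volume nu)
  (rho : R) (hrho : 0 < rho) (S : T -> set tup)
  (HS : poisson_point_process P nu rho S) (hd : (0 < d)%N)
  (Pp q : d.-tuple int) (k : nat) : 1 <= (Qn q : R) ->
  P.-negligible [set w | S w `&` Wset Pp q k = set0].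
Proof.
move=> Q1; case: HS => Hfin Hmeas Hlaw Hind.
pose B (n : nat) : set tup := box (lo Pp q k n) (hi Pp q k n).
have bm : forall n, bounded_measurable (B n).
  by move=> n; split; [exact: box_meas | exists (lo Pp q k n), (hi Pp q k n)].
pose r : R := rr k.
have r0 : 0 < r by rewrite /r /rr invr_gt0 ltr0n.
have r2 : 2 * r <= 1.
  have hk : (2%:R : R) <= k.+2%:R by rewrite ler_nat.
  have rk : r * k.+2%:R = 1 by rewrite /r /rr mulVf // pnatr_eq0.
  nra.
pose x := rho * (2 * r) ^+ d.
have x0 : 0 < x by rewrite /x mulr_gt0 // exprn_gt0 // mulr_gt0.
have nuB : forall n, nu (B n) = ((2 * r) ^+ d)%:E.
  move=> n; rewrite /B Hnu; last first.
    by move=> i; rewrite /lo /hi !tnth_mktuple -/r; lra.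
  congr (_%:E).
  rewrite (eq_bigr (fun=> 2 * r)); last first.
    by move=> i _; rewrite /lo /hi !tnth_mktuple -/r; ring.
  by rewrite prodr_const card_ord.
have PB : forall n, P [set w | count_in (S w) (B n) = 0%N] = (expR (- x))%:E.
  move=> n; rewrite Hlaw // nuB /= /poisson_mass /x.
  by rewrite expr0 /= mul1r invr1 mul1r.
pose C m := \bigcap_(j in [set: 'I_m]) [set w | count_in (S w) (B j) = 0%N].
have PC : forall m, P (C m) = ((expR (- x)) ^+ m)%:E.
  move=> m; rewrite /C (Hind m (fun j => B j) (fun _ => 0%N)) //; last first.
    move=> i j ij; apply/seteqP; split => // z [zi zj].
    have := zi (Ordinal hd); have := zj (Ordinal hd).
    rewrite /lo /hi !tnth_mktuple /cen /uu /= => /andP[h1 h2] /andP[h3 h4].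
    have Q0 : 0 < (Qn q : R) by apply: lt_le_trans Q1.
    have : val i != val j by [].
    case: (ltngtP (val i) (val j)) => // hij _.
      have : ((val i).+2%:R : R) <= (val j).+1%:R by rewrite ler_nat.
      rewrite -/r in h1 h2 h3 h4; move=> hh.
      have e : ((val i).+2%:R : R) = (val i).+1%:R + 1 by rewrite -natr1.
      rewrite e in hh; nra.
    have : ((val j).+2%:R : R) <= (val i).+1%:R by rewrite ler_nat.
    rewrite -/r in h1 h2 h3 h4; move=> hh.
    have e : ((val j).+2%:R : R) = (val j).+1%:R + 1 by rewrite -natr1.
    rewrite e in hh; nra.
  under eq_bigr => j _ do rewrite PB.
  by rewrite prodEFin prodr_const card_ord.
have mC : forall m, measurable (C m).
  move=> m; apply: fin_bigcap_measurable; first exact: finite_finset.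
  by move=> j _; apply: Hmeas.
have mCC : measurable (\bigcap_m C m) by apply: bigcapT_measurable.
exists (\bigcap_m C m); split => //; last first.
  move=> w /= hw m _ j _ /=; apply: count0; apply/seteqP; split => // z [Sz Bz].
  have : (S w `&` Wset Pp q k) z by split => //; exists j.
  by rewrite hw.
have le : forall m, (P (\bigcap_m C m) <= ((expR (- x)) ^+ m)%:E)%E.
  move=> m; rewrite -PC; apply: le_measure; [exact/mem_set|exact/mem_set/mC|].
  by move=> w H; exact: H m I.
have ge0 : (0 <= P (\bigcap_m C m))%E by apply: measure_ge0.
move: le ge0; case: (P (\bigcap_m C m)) => [z||] le ge0; last first.
- by [].
- by have := le 0%N; rewrite expr0.
apply/eqP; rewrite eqe; move: ge0; rewrite lee_fin => ge0.
rewrite eq_le ge0 andbT leNgt; apply/negP => z0.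
pose m := Num.truncn ((x * z)^-1).
have hm := truncnS_gt ((x * z)^-1).
have := le m.+1; rewrite lee_fin -expRM_natl mulrN expRN => hz.
have h1 : 1 + m.+1%:R * x <= expR (m.+1%:R * x) := expR_ge1Dx _.
have hE : 0 < expR (m.+1%:R * x) := expR_gt0 _.
have : z * expR (m.+1%:R * x) <= 1.
  by move: hz; rewrite -(ler_pM2r hE) mulVf ?gt_eqF.
have hxz : 0 < x * z by rewrite mulr_gt0.
move: hm; rewrite -(ltr_pM2r hxz) mulVf ?gt_eqF // => hm.
nra.
Qed.

End Prob.


Unset Implicit Arguments.

Theorem mainTheorem16 (R : realType) (d : nat) (hd : (0 < d)%N)
    (dT : measure_display) (T : measurableType dT) (P : probability T R)
    (nu : {measure set (d.-tuple R) -> \bar R})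
    (Hnu : is_lebesgue_volume nu)
    (rho : R) (hrho : 0 < rho)
    (S : T -> set (d.-tuple R))
    (HS : poisson_point_process P nu rho S) :
  P.-negligible [set w | exists a b : d.-tuple R,
     S w a /\ S w b /\ a <> b /\ singleton_symmetric (S w) a b].
Proof.
pose A (n : nat) : set T :=
  match @choice.unpickle (d.-tuple int * d.-tuple int * nat)%type n with
  | Some (Pp, q, k) => if 1 <= (Qn q : R) then [set w | S w `&` Wset Pp q k = set0] else set0
  | None => set0 end.
apply: (@negligibleS _ _ _ _ (\bigcup_n A n)); last first.
  apply: negligible_bigcup => n; rewrite /A; case: choice.unpickle => [[[Pp q] k]|].
    case: ifP => h; [exact: (negl_W Hnu hrho HS hd Pp k h) | exact: negligible_set0].
  exact: negligible_set0.
move=> w [a [b [Sa [Sb [ab [EL _]]]]]].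
apply: contrapT => notin.
have HS' := HS; case: HS' => Hfin _ _ _.
have Hfin' : forall lo hi, finite_set (S w `&` box lo hi).
  move=> lo hi; apply: Hfin; split; [exact: box_meas | by exists lo, hi].
have meet : forall Pp q k, 1 <= (Qn q : R) -> exists x, S w x /\ Wset Pp q k x.
  move=> Pp q k Q1; apply: contrapT => H; apply: notin; exists (choice.pickle (Pp, q, k)) => //.
  rewrite /A choice.pickleK Q1 /=; apply/seteqP; split => // x [Sx Wx]; apply: H; by exists x.
case: (pselect (causal_lt b a)) => hba.
  exact: (noSS Hfin' Sa Sb hba (@lt_irr _ _ b) EL).
case: (pselect (causal_lt a b)) => hab.
  exact: (noSS Hfin' Sb Sa hab (@lt_irr _ _ a) (esym EL)).
have [Pp [q [k [Q1 HW]]]] := geo ab hab hba.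
have [x [Sx Wx]] := meet Pp q k Q1.
have [xa nxb] := HW x Wx.
exact: (noSS Hfin' Sa Sx xa nxb EL).
Qed.
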